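(* Let $R$ be an irreducible root system spanning a rational vector space $L$. Then for every nonzero linear function $l\in L^*$ there is a Weyl chamber $C\subset L$ of $R$ such that $\overline C\subset l^+$ and $\overline C\cap l^0=\{0\}$, where $l^+=\{x\in L\mid l(x)\geqslant0\}$, $l^0=\{x\in L\mid l(x)=0\}$ and $\overline C$ is the closure of $C$ in $L$. *)

(* Defs.v *)
(* L = Q^n realised as row vectors 'rV[rat]_n,
   linear functions L* as column vectors 'cV[rat]_n. *)
From mathcomp Require Import all_boot all_order all_algebra.
Set Implicit Arguments. Unset Strict Implicit. Unset Printing Implicit Defensive.
Import Order.TTheory GRing.Theory Num.Theory.
Local Open Scope ring_scope.

Definition ev (n : nat) (f : 'cV[rat]_n) (x : 'rV[rat]_n) : rat := (x *m f) 0 0.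

Definition refl (n : nat) (cor : 'rV[rat]_n -> 'cV[rat]_n) (a x : 'rV[rat]_n) :
  'rV[rat]_n := x - (ev (cor a) x) *: a.

(* Bourbaki-style root system R in L with coroot map cor (a |-> a^vee):
   R finite (a seq), spans L, 0 notin R, a^vee(a) = 2, s_a(R) = R,
   a^vee(b) integral. *)
Definition root_system (n : nat) (R : seq 'rV[rat]_n)
  (cor : 'rV[rat]_n -> 'cV[rat]_n) : Prop :=
  [/\ row_full (\matrix_(i < size R) nth 0 R i),
      0 \notin R,
      (forall a, a \in R -> ev (cor a) a = 2),
      (forall a b, a \in R -> b \in R -> refl cor a b \in R) &
      (forall a b, a \in R -> b \in R -> ev (cor a) b \is a Num.int)].

Definition irreducible_rs (n : nat) (R : seq 'rV[rat]_n)
  (cor : 'rV[rat]_n -> 'cV[rat]_n) : Prop :=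
  ~ exists P : pred 'rV[rat]_n,
      [/\ has P R, has (predC P) R &
          forall a b, a \in R -> b \in R -> P a -> ~~ P b -> ev (cor a) b = 0].

Definition regular (n : nat) (R : seq 'rV[rat]_n)
  (cor : 'rV[rat]_n -> 'cV[rat]_n) (x0 : 'rV[rat]_n) : Prop :=
  forall a, a \in R -> ev (cor a) x0 != 0.

(* Weyl chamber: a nonempty region of the complement of the root
   hyperplanes on which every a^vee has constant sign, i.e. the chamber
   containing some regular x0 *)
Definition weyl_chamber (n : nat) (R : seq 'rV[rat]_n)
  (cor : 'rV[rat]_n -> 'cV[rat]_n) (C : 'rV[rat]_n -> Prop) : Prop :=
  exists x0, regular R cor x0 /\
    forall x, C x <-> (forall a, a \in R -> 0 < ev (cor a) x * ev (cor a) x0).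

Definition closure_L (n : nat) (C : 'rV[rat]_n -> Prop) (x : 'rV[rat]_n) : Prop :=
  forall e : rat, 0 < e -> exists y, C y /\ forall i, `|x 0 i - y 0 i| < e.

(* Main.v *)
Require Import Defs.
From mathcomp Require Import all_boot all_order all_algebra.
From mathcomp Require Import ring lra.
From Stdlib Require Import Classical ClassicalEpsilon.
Import Order.TTheory GRing.Theory Num.Theory.
Local Open Scope ring_scope.

Definition dec (P : Prop) : bool := if excluded_middle_informative P then true else false.
Lemma decP (P : Prop) : reflect P (dec P).
Proof. by rewrite /dec; case: excluded_middle_informative => H; constructor. Qed.

Section Ev.
Variable n : nat.
Implicit Types (f g : 'cV[rat]_n) (x y : 'rV[rat]_n).
Lemma evD f x y : ev f (x + y) = ev f x + ev f y.
Proof. by rewrite /ev mulmxDl mxE. Qed.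
Lemma evZ f k x : ev f (k *: x) = k * ev f x.
Proof. by rewrite /ev -scalemxAl mxE. Qed.
Lemma ev0 f : ev f 0 = 0.
Proof. by rewrite /ev mul0mx mxE. Qed.
Lemma evN f x : ev f (- x) = - ev f x.
Proof. by rewrite -scaleN1r evZ mulN1r. Qed.
Lemma evB f x y : ev f (x - y) = ev f x - ev f y.
Proof. by rewrite evD evN. Qed.
Lemma evfD f g x : ev (f + g) x = ev f x + ev g x.
Proof. by rewrite /ev mulmxDr mxE. Qed.
Lemma evfZ k f x : ev (k *: f) x = k * ev f x.
Proof. by rewrite /ev -scalemxAr mxE. Qed.
Lemma evfN f x : ev (- f) x = - ev f x.
Proof. by rewrite -scaleN1r evfZ mulN1r. Qed.
Lemma evf0 x : ev 0 x = 0.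
Proof. by rewrite /ev mulmx0 mxE. Qed.
Lemma ev_sum (I : Type) (s : seq I) (P : pred I) (F : I -> 'rV[rat]_n) f :
  ev f (\sum_(i <- s | P i) F i) = \sum_(i <- s | P i) ev f (F i).
Proof. exact: (big_morph (ev f) (evD f) (ev0 f)). Qed.
Lemma evf_sum (I : Type) (s : seq I) (P : pred I) (F : I -> 'cV[rat]_n) x :
  ev (\sum_(i <- s | P i) F i) x = \sum_(i <- s | P i) ev (F i) x.
Proof. exact: (big_morph (fun f => ev f x) (fun f g => evfD f g x) (evf0 x)). Qed.
Lemma ev_delta x i : ev (delta_mx i 0) x = x 0 i.
Proof.
rewrite /ev mxE (bigD1 i) //= mxE !eqxx mulr1 big1 ?addr0 // => j H.
by rewrite mxE (negbTE H) mulr0.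
Qed.
Lemma vec_ext x y : (forall f, ev f x = ev f y) -> x = y.
Proof. by move=> H; apply/rowP => i; rewrite -!ev_delta H ?ord1. Qed.
End Ev.

Lemma exists_reg n (fs : seq 'cV[rat]_n) :
  (forall f, f \in fs -> f != 0) -> exists z, forall f, f \in fs -> ev f z != 0.
Proof.
move=> Hfs.
pose pf (f : 'cV[rat]_n) : {poly rat} := \sum_(i < n) f i 0 *: 'X^i.
have pfE f s : (pf f).[s] = ev f (\row_i s ^+ i).
  rewrite /pf horner_sum /ev mxE; apply: eq_bigr => i _.
  by rewrite hornerZ hornerXn mxE mulrC.
have pfn0 f : f != 0 -> pf f != 0.
  move=> fn0; apply/negP => /eqP p0; move/negP: fn0; apply; apply/eqP.
  apply/matrixP => i j; rewrite (ord1 j) mxE.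
  have := congr1 (fun p : {poly rat} => p`_i) p0.
  rewrite /pf coef_sum coef0 (bigD1 i) //= coefZ coefXn eqxx mulr1 big1 ?addr0 //.
  by move=> k /negbTE ki; rewrite coefZ coefXn eq_sym (inj_eq val_inj) ki mulr0.
pose p := \prod_(f <- fs) pf f.
have pn0 : p != 0.
  rewrite prodf_seq_neq0; apply/allP => f /Hfs /pfn0 //.
pose rs := [seq k%:R : rat | k <- iota 0 (size p)].
have Urs : uniq rs.
  by rewrite map_inj_uniq ?iota_uniq // => a b /eqP; rewrite eqr_nat => /eqP.
have : ~~ all (root p) rs.
  apply/negP => H; have := max_poly_roots pn0 H Urs.
  by rewrite size_map size_iota ltnn.
case/allPn => s _ ns.
exists (\row_i s ^+ i) => f ffs.
rewrite -pfE; move: ns; rewrite /root /p horner_prod prodf_seq_neq0 => /allP.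
by move/(_ f ffs).
Qed.

Section RS.
Variables (n : nat) (R : seq 'rV[rat]_n) (cor : 'rV[rat]_n -> 'cV[rat]_n).
Hypothesis HR : root_system R cor.
Local Notation s := (refl cor).

Lemma rs_span y : exists u : 'rV_(size R), y = \sum_i u 0 i *: nth 0 R i.
Proof.
case: HR => Hf _ _ _ _.
have /submxP [D ->] := submx_full y Hf.
exists D; rewrite mulmx_sum_row; apply: eq_bigr => i _; by rewrite rowK.
Qed.

Lemma rs_ev2 [a] : a \in R -> ev (cor a) a = 2.
Proof. by case: HR => _ _ H _ _; apply: H. Qed.
Lemma rs_refl [a b] : a \in R -> b \in R -> s a b \in R.
Proof. by case: HR => _ _ _ H _; apply: H. Qed.
Lemma rs_neq0 [a] : a \in R -> a != 0.
Proof. move=> aR; apply/eqP => a0; move: (rs_ev2 aR); rewrite a0 ev0 => /eqP. by []. Qed.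

Lemma ev_span g h : (forall a, a \in R -> ev g a = ev h a) -> forall z, ev g z = ev h z.
Proof.
move=> H z; have [u ->] := rs_span z; rewrite !ev_sum; apply: eq_bigr => i _.
by rewrite !evZ H // mem_nth.
Qed.

Lemma evs g a x : ev g (s a x) = ev g x - ev (cor a) x * ev g a.
Proof. by rewrite /refl evB evZ. Qed.

Lemma ssK [a] : a \in R -> forall x, s a (s a x) = x.
Proof.
move=> aR x; rewrite {1}/refl evs rs_ev2 // /refl.
apply/rowP => i; rewrite !mxE; ring.
Qed.

Lemma s_perm [a] : a \in R -> perm_eq [seq s a c | c <- undup R] (undup R).
Proof.
move=> aR.
have inj : injective (s a) by apply: (can_inj (ssK aR)).
have U1 : uniq [seq s a c | c <- undup R] by rewrite map_inj_uniq ?undup_uniq.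
have sub : {subset [seq s a c | c <- undup R] <= undup R}.
  by move=> y /mapP [c]; rewrite mem_undup => cR ->; rewrite mem_undup rs_refl.
have [_ E] := uniq_min_size U1 sub (eq_leq (esym (size_map _ _))).
by apply: uniq_perm => //; exact: undup_uniq.
Qed.

Lemma sum_s a (F : 'rV[rat]_n -> rat) : a \in R ->
  \sum_(c <- undup R) F (s a c) = \sum_(c <- undup R) F c.
Proof. by move=> aR; rewrite -[RHS](perm_big _ (s_perm aR)) big_map. Qed.

Lemma cor_uniq c g : c \in R -> ev g c = 2 ->
  (forall y, y \in R -> y - ev g y *: c \in R) ->
  forall z, ev g z = ev (cor c) z.
Proof.
move=> cR gc Hg; apply: ev_span => y yR.
pose h z := ev g z - ev (cor c) z.
have hc : h c = 0 by rewrite /h gc (rs_ev2 cR) subrr.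
have step w : w \in R -> w + h w *: c \in R.
  move=> wR; have := rs_refl cR (Hg w wR).
  congr (_ \in R); rewrite /refl evB evZ (rs_ev2 cR) /h.
  apply/rowP => i; rewrite !mxE; ring.
have hlin w k : h (w + k *: c) = h w.
  by rewrite /h !evD !evZ -/(h c) gc (rs_ev2 cR); ring.
have iter k : y + (k%:R * h y) *: c \in R.
  elim: k => [|k IH]; first by rewrite mul0r scale0r addr0.
  have := step _ IH; rewrite hlin -addrA -scalerDl; congr (_ \in R).
  by congr (_ + _ *: _); rewrite -nat1r; ring.
apply/eqP; rewrite -subr_eq0; apply/negPn/negP => hne.
pose L := [seq y + (k%:R * h y) *: c | k <- iota 0 (size R).+1].
have UL : uniq L.
  rewrite map_inj_uniq ?iota_uniq // => k1 k2 /(congr1 (ev (cor c))).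
  rewrite !evD !evZ (rs_ev2 cR) => /addrI E.
  have /eqP : (k1%:R - k2%:R : rat) * (h y * 2) = 0.
    by rewrite mulrBl !mulrA E subrr.
  rewrite !mulf_eq0 (negbTE hne) /= orbF subr_eq0 eqr_nat => /eqP; done.
have sub : {subset L <= undup R}.
  by move=> w /mapP [k _ ->]; rewrite mem_undup iter.
have := uniq_leq_size UL sub; rewrite size_map size_iota.
by move/leq_trans/(_ (size_undup R)); rewrite ltnn.
Qed.

Lemma cor_s a b : a \in R -> b \in R -> forall z,
  ev (cor (s a b)) z = ev (cor b) z - ev (cor b) a * ev (cor a) z.
Proof.
move=> aR bR z.
pose g := cor b - ev (cor b) a *: cor a.
have gE w : ev g w = ev (cor b) w - ev (cor b) a * ev (cor a) w.
  by rewrite /g evfD evfN evfZ.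
rewrite -gE; symmetry; apply: cor_uniq; first exact: rs_refl.
  rewrite gE !evs (rs_ev2 aR) (rs_ev2 bR); ring.
move=> y yR.
have := rs_refl aR (rs_refl bR (rs_refl aR yR)); congr (_ \in R).
rewrite gE /refl !(evfD, evfN, evfZ, evB, evZ) (rs_ev2 aR) ?(rs_ev2 bR).
apply/rowP => i; rewrite !mxE; ring.
Qed.

Definition ip (p q : 'cV[rat]_n) := \sum_(c <- undup R) ev p c * ev q c.

Lemma KI a p : a \in R -> ev p a * ip (cor a) (cor a) = 2 * ip p (cor a).
Proof.
move=> aR.
have E := sum_s a (fun c => ev p c * ev (cor a) (s a c)) aR.
have E2 : \sum_(c <- undup R) (ev p (s a c) * ev (cor a) (s a (s a c)) -
   ev p c * ev (cor a) (s a c)) = 0 by rewrite sumrB E subrr.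
rewrite /ip !mulr_sumr; apply/eqP; rewrite -subr_eq0 -sumrB; apply/eqP.
have E3 := congr1 -%R E2; rewrite oppr0 -sumrN in E3.
rewrite -[RHS]E3; apply: eq_bigr => c _.
rewrite (ssK aR) !evs (rs_ev2 aR); ring.
Qed.

Lemma ip_ge0 p : 0 <= ip p p.
Proof. by apply: sumr_ge0 => c _; exact: sqr_ge0. Qed.

Lemma ip_eq0 p : ip p p = 0 -> forall c, c \in R -> ev p c = 0.
Proof.
move=> /eqP; rewrite /ip psumr_eq0 => [H c cR|c _]; last exact: sqr_ge0.
have /allP /(_ c) := H; rewrite mem_undup => /(_ cR) /=.
by rewrite mulf_eq0 orbb => /eqP.
Qed.

Lemma ipaa_gt0 a : a \in R -> 0 < ip (cor a) (cor a).
Proof.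
move=> aR; rewrite lt_def ip_ge0 andbT; apply/eqP => /ip_eq0 /(_ a aR).
by rewrite (rs_ev2 aR).
Qed.

Lemma ipC p q : ip p q = ip q p.
Proof. by apply: eq_bigr => c _; rewrite mulrC. Qed.

Lemma sym0 a b : a \in R -> b \in R -> ev (cor a) b = 0 -> ev (cor b) a = 0.
Proof.
move=> aR bR H.
have K1 := KI b (cor a) bR; have K2 := KI a (cor b) aR.
rewrite H mul0r ipC in K1.
have : ev (cor b) a * ip (cor a) (cor a) = 0 by rewrite K2 -K1.
by move/eqP; rewrite mulf_eq0 (gt_eqF (ipaa_gt0 a aR)) orbF => /eqP.
Qed.

Lemma ip_sum (I : Type) (r : seq I) (k : I -> rat) (q : I -> 'cV[rat]_n) p :
  ip p (\sum_(i <- r) k i *: q i) = \sum_(i <- r) k i * ip p (q i).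
Proof.
rewrite /ip; under eq_bigr do rewrite evf_sum mulr_sumr.
rewrite exchange_big; apply: eq_bigr => i _; rewrite mulr_sumr.
by apply: eq_bigr => c _; rewrite evfZ; ring.
Qed.

Lemma CS y : (forall c, c \in R -> ev (cor c) y = 0) -> y = 0.
Proof.
move=> Hy; have [u yE] := rs_span y.
pose r (i : 'I_(size R)) := nth 0 R i.
have rR i : r i \in R by rewrite mem_nth.
pose k i := u 0 i * 2 / ip (cor (r i)) (cor (r i)).
pose psi := \sum_(i <- index_enum 'I_(size R)) k i *: cor (r i).
have Hp p : ev p y = ip p psi.
  rewrite /psi ip_sum yE ev_sum; apply: eq_bigr => i _.
  rewrite evZ /k.
  have K := KI (r i) p (rR i).
  have nz := lt0r_neq0 (ipaa_gt0 (r i) (rR i)).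
  rewrite -[ev p _](mulfK nz) K /r; ring.
have H0 : ip psi psi = 0.
  rewrite -Hp /psi evf_sum big1 // => i _; by rewrite evfZ Hy ?mulr0.
have H1 := ip_eq0 psi H0.
apply: vec_ext => p; rewrite ev0 Hp /ip big1_seq // => c; rewrite mem_undup => /andP [_ cR].
by rewrite H1 // mulr0.
Qed.

Lemma key (Hirr : irreducible_rs R cor) x y : x != 0 ->
  (forall b, b \in R -> ev (cor b) x != 0 -> ev (cor b) y = 0) -> y = 0.
Proof.
move=> xn0 Hy.
pose Q c := forall z, (forall b, b \in R -> ev (cor b) x != 0 -> ev (cor b) z = 0) ->
  ev (cor c) z = 0.
have [allQ|] := decP (forall c, c \in R -> Q c).
  by apply: CS => c cR; apply: allQ.
move=> nQ; exfalso; apply: Hirr.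
exists (fun a => ~~ dec (Q a)); split.
- have [c [cR nc]] : exists c, c \in R /\ ~ Q c.
    apply: NNPP => H; apply: nQ => c cR; apply: NNPP => nc; apply: H; by exists c.
  by apply/hasP; exists c => //; apply/negP => /decP.
- have [/hasP [b bR bx]|/hasPn H] := boolP (has (fun b => ev (cor b) x != 0) R).
    apply/hasP; exists b => //=; rewrite negbK; apply/decP => z Hz; exact: Hz.
  by exfalso; move/eqP: xn0; apply; apply: CS => c /H; rewrite negbK => /eqP.
- move=> a b aR bR /negP Pa; rewrite negbK => /decP Qb.
  have ax : ev (cor a) x = 0.
    apply/eqP; apply/negP => /negP ax; apply: Pa; apply/decP => z Hz; exact: Hz.
  apply: (sym0 b a bR aR); apply: Qb => b' b'R b'x.
  apply/eqP; apply/negP => /negP nz; apply: Pa; apply/decP => z Hz.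
  have c1 := cor_s a b' aR b'R.
  have h1 : ev (cor (s a b')) z = 0.
    by apply: Hz; [exact: rs_refl | rewrite c1 ax mulr0 subr0].
  rewrite c1 (Hz b' b'R b'x) sub0r in h1.
  by move/eqP: h1; rewrite oppr_eq0 mulf_eq0 (negbTE nz) => /eqP.
Qed.

Lemma sumsq_eq0 (F : 'rV[rat]_n -> rat) :
  \sum_(c <- undup R) F c * F c = 0 -> forall c, c \in R -> F c = 0.
Proof.
move=> /eqP; rewrite psumr_eq0 => [H c cR|c _]; last exact: sqr_ge0.
have /allP /(_ c) := H; rewrite mem_undup => /(_ cR) /=.
by rewrite mulf_eq0 orbb => /eqP.
Qed.

Lemma main_rs (Hirr : irreducible_rs R cor) l : l != 0 ->
  exists x0, regular R cor x0 /\ forall x',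
    (forall a, a \in R -> 0 <= ev (cor a) x' * ev (cor a) x0) ->
    0 <= ev l x' /\ (ev l x' = 0 -> x' = 0).
Proof.
move=> hl.
pose M := \sum_(c <- undup R) cor c *m (cor c)^T.
have evTT (w z : 'rV[rat]_n) : ev (w^T) z = ev (z^T) w.
  by rewrite /ev -[z *m _]trmxK trmx_mul trmxK mxE.
have MvE v : v *m M = \sum_(c <- undup R) ev (cor c) v *: (cor c)^T.
  rewrite /M mulmx_sumr; apply: eq_bigr => c _.
  by rewrite mulmxA [v *m cor c]mx11_scalar mul_scalar_mx.
have evM z v : ev (z^T) (v *m M) = \sum_(c <- undup R) ev (cor c) v * ev (cor c) z.
  by rewrite MvE ev_sum; apply: eq_bigr => c _; rewrite evZ evTT trmxK.
have Munit : M \in unitmx.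
  rewrite -row_free_unit; apply: inj_row_free => v vM0.
  apply: CS; apply: (sumsq_eq0 (fun c => ev (cor c) v)).
  by rewrite -evM vM0 ev0.
pose x := l^T *m invmx M.
have xM : x *m M = l^T by rewrite mulmxKV.
have lE z : ev l z = \sum_(c <- undup R) ev (cor c) x * ev (cor c) z.
  by rewrite -evM xM evTT trmxK.
have xn0 : x != 0.
  apply/eqP => x0; move/eqP: hl; apply.
  by rewrite -[l]trmxK -xM x0 mul0mx trmx0.
have [z Hz] : exists z, forall f, f \in map cor R -> ev f z != 0.
  apply: exists_reg => f /mapP [a aR ->]; apply/eqP => a0.
  by move: (rs_ev2 aR); rewrite a0 evf0.
have fz a : a \in R -> ev (cor a) z != 0 by move=> aR; apply: Hz; exact: map_f.
pose S := \sum_(c <- undup R) `|ev (cor c) z| / `|ev (cor c) x|.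
have S0 : 0 <= S by apply: sumr_ge0 => c _; rewrite divr_ge0.
pose t := (1 + S)^-1.
have t0 : 0 < t by rewrite invr_gt0; lra.
have bound a : a \in R -> ev (cor a) x != 0 -> t * `|ev (cor a) z| < `|ev (cor a) x|.
  move=> aR ax.
  have H : `|ev (cor a) z| / `|ev (cor a) x| <= S.
    rewrite /S (bigD1_seq a) ?mem_undup ?undup_uniq //=.
    by rewrite lerDl sumr_ge0 // => c _; rewrite divr_ge0.
  have ax0 : 0 < `|ev (cor a) x| by rewrite normr_gt0.
  rewrite ler_pdivrMr // in H.
  rewrite mulrC ltr_pdivrMr; last lra.
  nra.
pose x0 := x + t *: z.
have pos a : a \in R -> ev (cor a) x != 0 -> 0 < ev (cor a) x0 * ev (cor a) x.
  move=> aR ax; have h1 := bound a aR ax.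
  have h4 : 0 < `|ev (cor a) x| by rewrite normr_gt0.
  have h3 : ev (cor a) x * ev (cor a) x = `|ev (cor a) x| * `|ev (cor a) x|.
    by rewrite -normrM ger0_norm // sqr_ge0.
  have h2 : - (t * `|ev (cor a) z| * `|ev (cor a) x|) <= t * ev (cor a) z * ev (cor a) x.
    by apply: lerNnormlW; rewrite !normrM (ger0_norm (ltW t0)).
  rewrite /x0 evD evZ; nra.
have reg : regular R cor x0.
  move=> a aR; have [ax|ax] := eqVneq (ev (cor a) x) 0.
    by rewrite /x0 evD evZ ax add0r mulf_neq0 ?fz // lt0r_neq0.
  by have := pos a aR ax; apply: contraTneq => ->; rewrite mul0r ltxx.
exists x0; split => // x' Hx'.
have term c : c \in R -> 0 <= ev (cor c) x * ev (cor c) x'.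
  move=> cR; have [cx|cx] := eqVneq (ev (cor c) x) 0; first by rewrite cx mul0r.
  have h := mulr_ge0 (ltW (pos c cR cx)) (Hx' c cR).
  have q : 0 < ev (cor c) x0 * ev (cor c) x0.
    by rewrite lt_def sqr_ge0 andbT mulf_neq0 // reg.
  rewrite -(pmulr_lge0 _ q).
  suff -> : ev (cor c) x * ev (cor c) x' * (ev (cor c) x0 * ev (cor c) x0) =
    ev (cor c) x0 * ev (cor c) x * (ev (cor c) x' * ev (cor c) x0) by [].
  ring.
have term' c : c \in undup R -> 0 <= ev (cor c) x * ev (cor c) x'.
  by rewrite mem_undup; exact: term.
split; first by rewrite lE big_seq; apply: sumr_ge0 => c; exact: term'.
move=> /eqP; rewrite lE big_seq psumr_eq0 => [/allP H|c]; last exact: term'.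
apply: (key Hirr x x' xn0) => b bR bx.
have /(_ b) := H; rewrite mem_undup => /(_ bR) /=; rewrite ?mem_undup ?bR /=.
by rewrite mulf_eq0 (negbTE bx) => /eqP.
Qed.
End RS.

Lemma ev_entries n (f : 'cV[rat]_n) x : ev f x = \sum_i x 0 i * f i 0.
Proof. by rewrite /ev mxE. Qed.

Lemma closure_D n (R : seq 'rV[rat]_n) (cor : 'rV[rat]_n -> 'cV[rat]_n) x0 x' :
  closure_L (fun y => forall a, a \in R -> 0 < ev (cor a) y * ev (cor a) x0) x' ->
  forall a, a \in R -> 0 <= ev (cor a) x' * ev (cor a) x0.
Proof.
move=> Hc a aR; rewrite leNgt; apply/negP => neg.
set u := ev (cor a) x' in neg.
have un0 : u != 0 by apply: contraTneq neg => ->; rewrite mul0r ltxx.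
have u0 : 0 < `|u| by rewrite normr_gt0.
pose K := \sum_i `|cor a i 0|.
have K0 : 0 <= K by apply: sumr_ge0 => i _.
pose e := `|u| / (1 + K).
have e0 : 0 < e by rewrite divr_gt0 //; lra.
have [y [Cy Hy]] := Hc e e0.
have d : `|u - ev (cor a) y| < `|u|.
  rewrite /u -evB ev_entries.
  apply: (le_lt_trans (ler_norm_sum _ _ _)).
  apply: (@le_lt_trans _ _ (\sum_i e * `|cor a i 0|)).
    apply: ler_sum => i _; rewrite normrM !mxE ler_wpM2r //.
    exact: ltW (Hy i).
  rewrite -mulr_sumr -/K.
  have eE : e * (1 + K) = `|u| by rewrite /e mulfVK //; apply: lt0r_neq0; lra.
  nra.
have uy : 0 < u * ev (cor a) y.
  have h1 : u * (u - ev (cor a) y) <= `|u| * `|u - ev (cor a) y|.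
    by rewrite -normrM ler_norm.
  have h2 : `|u| * `|u - ev (cor a) y| < `|u| * `|u|.
    by rewrite ltr_pM2l.
  have h3 : `|u| * `|u| = u * u by rewrite -normrM ger0_norm // sqr_ge0.
  nra.
have C1 := Cy a aR.
have P1 : 0 <= (u * ev (cor a) y) * (ev (cor a) x0 * ev (cor a) x0).
  by rewrite mulr_ge0 ?sqr_ge0 // ltW.
have P2 : (u * ev (cor a) x0) * (ev (cor a) y * ev (cor a) x0) < 0.
  by rewrite pmulr_llt0.
have E : (u * ev (cor a) x0) * (ev (cor a) y * ev (cor a) x0) =
  (u * ev (cor a) y) * (ev (cor a) x0 * ev (cor a) x0) by ring.
by rewrite E in P2; move: (le_lt_trans P1 P2); rewrite ltxx.
Qed.

Lemma closure0 n (R : seq 'rV[rat]_n) (cor : 'rV[rat]_n -> 'cV[rat]_n) x0 :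
  regular R cor x0 ->
  closure_L (fun y => forall a, a \in R -> 0 < ev (cor a) y * ev (cor a) x0) 0.
Proof.
move=> reg e e0.
pose K := \sum_i `|x0 0 i|.
have K0 : 0 <= K by apply: sumr_ge0 => i _.
pose t := e / (1 + K).
have t0 : 0 < t by rewrite divr_gt0 //; lra.
exists (t *: x0); split.
  move=> a aR; rewrite evZ -mulrA mulr_gt0 //.
  by rewrite lt_def sqr_ge0 andbT mulf_neq0 // reg.
move=> i; rewrite !mxE sub0r normrN normrM (gtr0_norm t0).
have Ki : `|x0 0 i| <= K.
  by rewrite /K (bigD1 i) //= lerDl sumr_ge0.
have tE : t * (1 + K) = e by rewrite /t mulfVK //; apply: lt0r_neq0; lra.
nra.
Qed.

Arguments closure_D {n R cor x0 x'}.
Arguments closure0 {n R cor x0}.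

Theorem lemma4 (n : nat) (R : seq 'rV[rat]_n) (cor : 'rV[rat]_n -> 'cV[rat]_n)
  (HR : root_system R cor) (Hirr : irreducible_rs R cor)
  (l : 'cV[rat]_n) (hl : l != 0) :
  exists C : 'rV[rat]_n -> Prop,
    [/\ weyl_chamber R cor C,
        (forall x, closure_L C x -> 0 <= ev l x) &
        (forall x, closure_L C x /\ ev l x = 0 <-> x = 0)].
Proof.
have [x0 [reg H]] := @main_rs n R cor HR Hirr l hl.
exists (fun y => forall a, a \in R -> 0 < ev (cor a) y * ev (cor a) x0); split.
- by exists x0; split.
- by move=> y cl; case: (H y (closure_D cl)).
- move=> y; split.
    by move=> [cl ly]; case: (H y (closure_D cl)) => _; apply.
  by move=> ->; split; [exact: closure0 | exact: ev0].
Qed.
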